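(* Let $G$, $(B,\nu_B)$ be as in the context, and let $\omega:B^3\to\mathbb R$ be measurable such that $\omega$ is an alternating strict cocycle, for every $g\in G$ $\omega(gx,gy,gz)=\omega(x,y,z)$ for a.e. $(x,y,z)$, and $\omega\in\{\pm1\}$ almost everywhere. For $(x,y)\in B^2$ let $I(x,y)=\{z\in B:\omega(x,z,y)=1\}$ and for $a\in B$ define $f_a:B\to\mathbb Z\backslash\mathbb R$ by $f_a(x)=\nu_B(I(a,x))\bmod\mathbb Z$. Then for almost every $a\in B$ and almost every $(x,y,z)\in B^3$, $o(f_a(x),f_a(y),f_a(z))=\omega(x,y,z)$.
   Context: $G$ is a locally compact second countable group, $\mu$ a spread out probability measure on $G$, and $(B,\nu_B)$ a standard Lebesgue $G$-space with $\mu$-stationary $\nu_B$, doubly ergodic (diagonal action on $B\times B$ ergodic) and amenable. An alternating strict cocycle is a function on $B^3$ alternating in its variables with $\omega(y,z,w)-\omega(x,z,w)+\omega(x,y,w)-\omega(x,y,z)=0$ for all $(x,y,z,w)$. The orientation cocycle $o:(S^1)^3\to\{-1,0,1\}$ on $S^1=\mathbb Z\backslash\mathbb R$ is $1$ on positively oriented triples, $-1$ on negatively oriented triples, and $0$ if the points are not pairwise distinct. *)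

(* Defs.v *)
From HB Require Import structures.
From mathcomp Require Import all_boot all_order all_algebra.
From mathcomp Require Import all_classical all_reals all_analysis.

Set Implicit Arguments.
Unset Strict Implicit.
Unset Printing Implicit Defensive.

Import Order.TTheory GRing.Theory Num.Theory.
Local Open Scope classical_set_scope.
Local Open Scope ring_scope.

Definition group_axioms {G : Type} (mul : G -> G -> G) (inv : G -> G) (one : G) :=
  [/\ (forall x y z, mul x (mul y z) = mul (mul x y) z),
      (forall x, mul one x = x), (forall x, mul x one = x),
      (forall x, mul (inv x) x = one) & (forall x, mul x (inv x) = one)].

Definition lcsc_group (G : ptopologicalType)
    (mul : G -> G -> G) (inv : G -> G) (one : G) :=
  group_axioms mul inv one /\
  [/\ continuous (fun p : G * G => mul p.1 p.2),
      continuous inv,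
      hausdorff_space G,
      locally_compact [set: G] & @second_countable G].

Notation borel_of G := (g_sigma_algebraType (@open G)).

Definition left_haar (R : realType) (G : ptopologicalType)
    (mul : G -> G -> G) (haar : {measure set borel_of G -> \bar R}) :=
  [/\ (forall g (A : set (borel_of G)), measurable A ->
         haar [set mul g x | x in A] = haar A),
      (forall K : set G, compact K -> (haar K < +oo)%E),
      (forall U : set G, open U -> U !=set0 -> (0 < haar U)%E),
      (forall A : set (borel_of G), measurable A ->
         haar A = ereal_inf [set haar U | U in [set U : set G | open U /\ A `<=` U]]) &
      (forall U : set G, open U ->
         haar U = ereal_sup [set haar K | K in [set K : set G | compact K /\ K `<=` U]])].

Fixpoint convpow (R : realType) (G : ptopologicalType)
    (mul : G -> G -> G) (one : G) (mu : set (borel_of G) -> \bar R) (n : nat)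
    : set (borel_of G) -> \bar R :=
  match n with
  | 0 => fun A => ((\1_A one)%:E)%E
  | n'.+1 => fun A =>
      (\int[mu]_g convpow mul one mu n' [set h | A (mul g h)])%E
  end.

Definition mutually_singular d (T : measurableType d) (R : realType)
    (m1 m2 : set T -> \bar R) :=
  exists N : set T, [/\ measurable N, m1 N = 0%E & m2 (~` N) = 0%E].

Definition spread_out (R : realType) (G : ptopologicalType)
    (mul : G -> G -> G) (one : G) (haar : set (borel_of G) -> \bar R)
    (mu : set (borel_of G) -> \bar R) :=
  exists n : nat, ~ mutually_singular haar (convpow mul one mu n).

(* Standard Borel: Borel isomorphic to a Borel subset of the real line
   (equivalent, by Kuratowski, to being Borel isomorphic to a Borel
   subset of a Polish space). *)
Definition standard_borel d (B : measurableType d) (R : realType) :=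
  exists phi : B -> R,
    [/\ injective phi, measurable_fun [set: B] phi,
        measurable (range phi) &
        (forall A : set B, measurable A -> measurable (phi @` A))].

Definition measurable_action (G : ptopologicalType) (mul : G -> G -> G) (one : G)
    d (B : measurableType d) (act : G -> B -> B) :=
  [/\ (forall x, act one x = x),
      (forall g h x, act (mul g h) x = act g (act h x)) &
      measurable_fun [set: borel_of G * B]
        (fun p : borel_of G * B => act p.1 p.2)].

Definition stationary (R : realType) (G : ptopologicalType) d (B : measurableType d)
    (act : G -> B -> B) (mu : set (borel_of G) -> \bar R) (nu : set B -> \bar R) :=
  forall A : set B, measurable A ->
    nu A = (\int[mu]_g nu [set x | A (act g x)])%E.

Definition doubly_ergodic (R : realType) (G : ptopologicalType) d (B : measurableType d)
    (act : G -> B -> B) (nu : set B -> \bar R) :=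
  forall E : set (B * B), measurable E ->
    (forall g, [set p | E (act g p.1, act g p.2)] = E) ->
    ((nu \x nu)%E E = 0%E \/ (nu \x nu)%E (~` E) = 0%E).

Definition bdd_meas d (T : measurableType d) (R : realType) (f : T -> R) :=
  measurable_fun [set: T] f /\ exists M : R, forall x, `|f x| <= M.

(* Amenability of the action in the sense of Zimmer: there is a
   G-equivariant conditional expectation
   m : L^infty(G x B, haar x nu) -> L^infty(B, nu),
   i.e. a positive unital L^infty(B)-linear map commuting with the
   diagonal G-action (g.f)(h,b) = f(g^-1 h, g^-1 b).  Elements of L^infty
   are represented by bounded measurable functions; equalities are up to
   null sets (a set in G x B is haar x nu - null iff haar-a.e. section is
   nu-null, Fubini). *)
Definition zimmer_amenable (R : realType) (G : ptopologicalType)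
    (mul : G -> G -> G) (inv : G -> G)
    d (B : measurableType d) (act : G -> B -> B)
    (haar : set (borel_of G) -> \bar R) (nu : set B -> \bar R) :=
  exists m : (borel_of G * B -> R) -> (B -> R),
    (forall f, bdd_meas f -> bdd_meas (m f)) /\
    [/\
        (forall f f', bdd_meas f -> bdd_meas f' ->
           {ae haar, forall g, {ae nu, forall b, f (g, b) = f' (g, b)}} ->
           {ae nu, forall b, m f b = m f' b}),
        (* L^infty(B)-linearity (includes linearity over constants) *)
        (forall f f' (psi : B -> R), bdd_meas f -> bdd_meas f' -> bdd_meas psi ->
           {ae nu, forall b,
              m (fun p => psi p.2 * f p + f' p) b = psi b * m f b + m f' b}),
        (forall f, bdd_meas f ->
           {ae haar, forall g, {ae nu, forall b, 0 <= f (g, b)}} ->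
           {ae nu, forall b, 0 <= m f b}),
        {ae nu, forall b, m (fun _ => 1) b = 1} &
        (forall (g : G) f, bdd_meas f ->
           {ae nu, forall b,
              m (fun p => f ((mul (inv g) p.1, act (inv g) p.2) : borel_of G * B)) b
              = m f (act (inv g) b)})].

Definition alternating3 (T : Type) (R : realType) (w : T -> T -> T -> R) :=
  forall x y z, w y x z = - w x y z /\ w x z y = - w x y z.

Definition strict_cocycle (T : Type) (R : realType) (w : T -> T -> T -> R) :=
  forall x y z t, w y z t - w x z t + w x y t - w x y z = 0.

(* Representative in [0,1) of the class of t in Z\R. *)
Definition circ_rep (R : realType) (t : R) : R := t - (Num.floor t)%:~R.

Definition orient (R : realType) (s t u : R) : R :=
  let a := circ_rep s in let b := circ_rep t in let c := circ_rep u in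
  if [|| (a < b) && (b < c), (b < c) && (c < a) | (c < a) && (a < b)] then 1
  else if [|| (a < c) && (c < b), (c < b) && (b < a) | (b < a) && (a < c)] then -1
  else 0.

Definition Iset (T : Type) (R : realType) (w : T -> T -> T -> R) (x y : T) : set T :=
  [set z | w x z y = 1].

(* f_a(x) = nu(I(a,x)) (mod Z; the reduction is built into orient). *)
Definition fa d (B : measurableType d) (R : realType)
    (nu : set B -> \bar R) (w : B -> B -> B -> R) (a x : B) : R :=
  fine (nu (Iset w a x)).

(* Main.v *)
From HB Require Import structures.
From mathcomp Require Import all_boot all_order all_algebra.
From mathcomp Require Import all_classical all_reals all_analysis.
From mathcomp Require Import measurable_realfun lebesgue_integral.
From mathcomp Require Import ring lra.
Require Import Defs.
Require Import Defs.
Import Order.TTheory GRing.Theory Num.Theory.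
Import numFieldNormedType.Exports.
Local Open Scope classical_set_scope.
Local Open Scope ring_scope.
Local Open Scope ereal_scope.
Lemma mpre d1 d2 (T1 : measurableType d1) (T2 : measurableType d2)
  (f : T1 -> T2) (A : set T2) : measurable_fun setT f -> measurable A ->
  measurable (f @^-1` A).
Proof. by move=> mf mA; have := mf measurableT A mA; rewrite setTI. Qed.
Lemma L0 (R : realType) d (T : measurableType d) (m : {measure set T -> \bar R})
  (f : T -> \bar R) : measurable_fun setT f -> (forall x, 0 <= f x) ->
  \int[m]_x f x = 0 -> m [set x | f x != 0] = 0.
Proof.
move=> mf f0 i0.
have : \int[m]_(x in setT) `|f x| = 0.
  by rewrite -i0; apply: eq_integral => x _; rewrite gee0_abs.
move/(ae_eq_integral_abs m measurableT mf) => [N [mN N0 sN]].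
have mS : measurable [set x | f x != 0].
  by have := emeasurable_neq measurableT mf 0; rewrite setTI.
have : m [set x | f x != 0] <= m N.
  apply: le_measure; rewrite ?inE //.
  move=> x /= fx; apply: sN => /= /(_ I) /eqP; by rewrite (negbTE fx).
by rewrite N0 => H; apply/eqP; rewrite -measure_le0.
Qed.

Lemma L1 (R : realType) d (T : measurableType d) (m : {measure set T -> \bar R})
  (f : T -> \bar R) (Z : set T) : measurable_fun setT f -> (forall x, 0 <= f x) ->
  measurable Z -> m Z = 0 -> (forall x, ~ Z x -> f x = 0) -> \int[m]_x f x = 0.
Proof.
move=> mf f0 mZ Z0 fZ.
transitivity (\int[m]_x (cst 0 x)); last exact: integral0.
apply: ge0_ae_eq_integral => //; try (by move=> x _; exact: f0).
exists Z; split => // x /= H; apply: contrapT => Zx; apply: H => _.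
exact: fZ.
Qed.

Section S.
Context (R : realType) d (B : measurableType d) (nu : probability B R).
Local Notation m2 := (nu \x nu).
Local Notation m3 := ((nu \x nu) \x nu).

Lemma m2E (A : set (B * B)) : m2 A = \int[nu]_x nu (xsection A x).
Proof. by []. Qed.

Lemma m3E (A : set (B * B * B)) : m3 A = \int[m2]_q nu (xsection A q).
Proof. by []. Qed.

Lemma msec2 (A : set (B * B)) : measurable A ->
  measurable_fun setT (fun x => nu (xsection A x)).
Proof. by move=> mA; apply: measurable_fun_xsection. Qed.

Lemma msec3 (A : set (B * B * B)) : measurable A ->
  measurable_fun setT (fun q => nu (xsection A q)).
Proof. by move=> mA; apply: measurable_fun_xsection. Qed.

Lemma null_sec (N : set (B * B)) : measurable N -> m2 N = 0 ->
  measurable [set x | nu (xsection N x) != 0] /\ nu [set x | nu (xsection N x) != 0] = 0.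
Proof.
move=> mN N0; split.
  by have := emeasurable_neq measurableT (@msec2 N mN) 0; rewrite setTI.
apply: L0 => //; first exact: msec2.
Qed.

Lemma pull_xy (N : set (B * B)) : measurable N -> m2 N = 0 ->
  m3 [set p | N p.1] = 0.
Proof.
move=> mN N0; have -> : [set p : B * B * B | N p.1] = N `*` setT.
  by apply/seteqP; split => p /=; [move=> ?; split|case].
by rewrite product_measure1E //; apply/eqP; rewrite mule_eq0; apply/orP; left; apply/eqP; exact: N0.
Qed.

Lemma pull_xz (N : set (B * B)) : measurable N -> m2 N = 0 ->
  m3 [set p | N (p.1.1, p.2)] = 0.
Proof.
move=> mN N0; have [mK K0] := null_sec _ mN N0.
set K := [set x | _] in mK K0.
have mA : measurable [set p : B * B * B | N (p.1.1, p.2)].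
  apply: (@mpre _ _ _ _ (fun p : B * B * B => (p.1.1, p.2))) => //.
  apply: measurable_fun_pair => //.
  by apply: measurableT_comp => //; exact: measurable_fst.
rewrite m3E; apply: (@L1 _ _ _ _ _ (K `*` setT)).
- exact: msec3.
- by move=> q.
- exact: measurableX.
- by transitivity (nu K * nu setT); [exact: product_measure1E|rewrite K0 mul0e].
move=> [x y] /= H.
have nK : ~ K x by move=> Kx; apply: H; split.
have -> : xsection [set p : B * B * B | N (p.1.1, p.2)] (x, y) = xsection N x.
  by rewrite !xsectionE.
by move/negP: nK; rewrite negbK => /eqP.
Qed.

Lemma pull_yz (N : set (B * B)) : measurable N -> m2 N = 0 ->
  m3 [set p | N (p.1.2, p.2)] = 0.
Proof.
move=> mN N0; have [mK K0] := null_sec _ mN N0.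
set K := [set x | _] in mK K0.
have mA : measurable [set p : B * B * B | N (p.1.2, p.2)].
  apply: (@mpre _ _ _ _ (fun p : B * B * B => (p.1.2, p.2))) => //.
  apply: measurable_fun_pair => //.
  by apply: measurableT_comp => //; exact: measurable_fst.
rewrite m3E; apply: (@L1 _ _ _ _ _ (setT `*` K)).
- exact: msec3.
- by move=> q.
- exact: measurableX.
- by transitivity (nu setT * nu K); [exact: product_measure1E|rewrite K0 mule0].
move=> [x y] /= H.
have nK : ~ K y by move=> Ky; apply: H; split.
have -> : xsection [set p : B * B * B | N (p.1.2, p.2)] (x, y) = xsection N y.
  by rewrite !xsectionE.
by move/negP: nK; rewrite negbK => /eqP.
Qed.


Lemma swap_m2 (N : set (B*B)) : measurable N ->
  (nu \x nu) [set p | N (p.2, p.1)] = (nu \x nu) N.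
Proof.
move=> mN.
have mS : measurable [set p : B * B | N (p.2, p.1)].
  apply: (@mpre _ _ _ _ (fun p : B * B => (p.2, p.1))) => //.
  by apply: measurable_fun_pair; [exact: measurable_snd|exact: measurable_fst].
rewrite (@product_measure_unique _ _ _ _ _ nu nu (nu \x^ nu)) //; last first.
  by move=> A1 A2 mA1 mA2; exact: product_measure2E.
Qed.


Lemma m3_12 (A : set (B * B * B)) : measurable A ->
  m3 A = ((nu \x nu : probability (B * B)%type R) \x^ nu) A.
Proof.
move=> mA.
exact: (@product_measure_unique _ _ _ _ _ (nu \x nu : probability (B * B)%type R) nu
   ((nu \x nu : probability (B * B)%type R) \x^ nu) (fun A1 A2 mA1 mA2 => product_measure2E _ _ mA1 mA2) A mA).
Qed.

Lemma mswap (r : set (B * B)) : measurable r -> measurable [set p | r (p.2, p.1)].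
Proof.
move=> mr; apply: (@mpre _ _ _ _ (fun p : B * B => (p.2, p.1))) => //.
by apply: measurable_fun_pair; [exact: measurable_snd|exact: measurable_fst].
Qed.

Lemma key (Y : set B) (r Nt : set (B * B)) : measurable Y -> measurable r ->
  measurable Nt -> m2 Nt = 0 -> (forall p, ~ Nt p -> r p \/ r (p.2, p.1)) ->
  (forall y', Y y' -> nu [set y | Y y /\ r (y, y')] = 0) -> nu Y = 0.
Proof.
move=> mY mr mNt Nt0 tot H.
have mYY : measurable (Y `*` Y) by exact: measurableX.
have mS1 : measurable ((Y `*` Y) `&` r) by exact: measurableI.
have mS2 : measurable ((Y `*` Y) `&` [set p | r (p.2, p.1)]).
  by apply: measurableI => //; exact: mswap.
have S10 : m2 ((Y `*` Y) `&` r) = 0.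
  rewrite (@product_measure_unique _ _ _ _ _ nu nu (nu \x^ nu)) //; last first.
    by move=> A1 A2 mA1 mA2; exact: product_measure2E.
  transitivity (\int[nu]_y nu (ysection ((Y `*` Y) `&` r) y)); first by [].
  apply: integral0_eq => y _; rewrite ysectionE.
  have [Yy|nYy] := pselect (Y y).
    rewrite (_ : _ @^-1` _ = [set x | Y x /\ r (x, y)]); first exact: H.
    by apply/seteqP; split => x /=; [case=> -[]|case=> ? ?].
  rewrite (_ : _ @^-1` _ = set0) ?measure0 //.
  by apply/seteqP; split => x /=; [case=> -[]|].
have S20 : m2 ((Y `*` Y) `&` [set p | r (p.2, p.1)]) = 0.
  rewrite m2E; apply: integral0_eq => y _; rewrite xsectionE.
  have [Yy|nYy] := pselect (Y y).
    rewrite (_ : _ @^-1` _ = [set x | Y x /\ r (x, y)]); first exact: H.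
    by apply/seteqP; split => x /=; [case=> -[]|case=> ? ?].
  rewrite (_ : _ @^-1` _ = set0) ?measure0 //.
  by apply/seteqP; split => x /=; [case=> -[]|].
have : m2 (Y `*` Y) = 0.
  apply: (subset_measure0 (B := ((Y `*` Y) `&` r) `|` ((Y `*` Y) `&` [set p | r (p.2, p.1)]) `|` Nt)) => //.
  - by apply: measurableU => //; exact: measurableU.
  - move=> p YYp; have [Ntp|nNtp] := pselect (Nt p); first by right.
    by left; case: (tot p nNtp) => rp; [left|right].
  - apply: null_set_setU => //; first exact: measurableU.
    exact: null_set_setU.
have -> : m2 (Y `*` Y) = nu Y * nu Y by exact: product_measure1E.
by move/eqP; rewrite mule_eq0 orbb => /eqP.
Qed.

Lemma pull_all (N : set (B * B)) : measurable N -> m2 N = 0 ->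
  exists Na : set (B * B * B), [/\ measurable Na, m3 Na = 0 &
   forall x y z, ~ Na ((x, y), z) -> [/\ ~ N (x, y), ~ N (y, z), ~ N (x, z) &
     [/\ ~ N (y, x), ~ N (z, y) & ~ N (z, x)]]].
Proof.
move=> mN N0.
pose Ns := [set p : B * B | N (p.2, p.1)].
have mNs : measurable Ns by exact: mswap.
have Ns0 : m2 Ns = 0 by rewrite /Ns swap_m2.
have mfxy : measurable_fun setT (fun p : B * B * B => p.1) by exact: measurable_fst.
have mfyz : measurable_fun setT (fun p : B * B * B => (p.1.2, p.2)).
  apply: measurable_fun_pair; last exact: measurable_snd.
  by apply: measurableT_comp; [exact: measurable_snd|exact: measurable_fst].
have mfxz : measurable_fun setT (fun p : B * B * B => (p.1.1, p.2)).
  apply: measurable_fun_pair; last exact: measurable_snd.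
  by apply: measurableT_comp; [exact: measurable_fst|exact: measurable_fst].
pose A1 := [set p : B * B * B | N p.1].
pose A2 := [set p : B * B * B | N (p.1.2, p.2)].
pose A3 := [set p : B * B * B | N (p.1.1, p.2)].
pose A4 := [set p : B * B * B | Ns p.1].
pose A5 := [set p : B * B * B | Ns (p.1.2, p.2)].
pose A6 := [set p : B * B * B | Ns (p.1.1, p.2)].
have m1 : measurable A1 by apply: (@mpre _ _ _ _ (fun p : B * B * B => p.1)).
have m2' : measurable A2 by apply: (@mpre _ _ _ _ (fun p : B * B * B => (p.1.2, p.2))).
have m3' : measurable A3 by apply: (@mpre _ _ _ _ (fun p : B * B * B => (p.1.1, p.2))).
have m4 : measurable A4 by apply: (@mpre _ _ _ _ (fun p : B * B * B => p.1)).
have m5 : measurable A5 by apply: (@mpre _ _ _ _ (fun p : B * B * B => (p.1.2, p.2))).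
have m6 : measurable A6 by apply: (@mpre _ _ _ _ (fun p : B * B * B => (p.1.1, p.2))).
exists (A1 `|` A2 `|` A3 `|` A4 `|` A5 `|` A6); split.
- by repeat apply: measurableU.
- have z1 : m3 A1 = 0 by exact: pull_xy.
  have z2 : m3 A2 = 0 by exact: pull_yz.
  have z3 : m3 A3 = 0 by exact: pull_xz.
  have z4 : m3 A4 = 0 by exact: pull_xy.
  have z5 : m3 A5 = 0 by exact: pull_yz.
  have z6 : m3 A6 = 0 by exact: pull_xz.
  repeat (apply: null_set_setU => //; try by repeat apply: measurableU).
- move=> x y z H; split; [| | |split] => h; apply: H.
  + by left; left; left; left; left.
  + by left; left; left; left; right.
  + by left; left; left; right.
  + by left; left; right.
  + by left; right.
  + by right.
Qed.

End S.

Local Open Scope ring_scope.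
Lemma circ_rep_id (R : realType) (x : R) : 0 <= x < 1 -> circ_rep x = x.
Proof.
move=> hx; rewrite /circ_rep (@floor_def _ x 0) ?subr0 //.
Qed.

Lemma pm1 (R : realType) (c : R) : c = 1 \/ c = -1 -> c != 1 -> c = -1.
Proof. by case=> -> //; rewrite eqxx. Qed.

Lemma orient_lem (R : realType) (x y z cxy cyz cxz : R) :
  0 <= x < 1 -> 0 <= y < 1 -> 0 <= z < 1 ->
  (cxy = 1 \/ cxy = -1) -> (cyz = 1 \/ cyz = -1) -> (cxz = 1 \/ cxz = -1) ->
  (cxy = 1 -> x < y) -> (cxy = -1 -> y < x) ->
  (cyz = 1 -> y < z) -> (cyz = -1 -> z < y) ->
  (cxz = 1 -> x < z) -> (cxz = -1 -> z < x) ->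
  (cyz - cxz + cxy = 1 \/ cyz - cxz + cxy = -1) ->
  orient x y z = cyz - cxz + cxy.
Proof.
move=> hx hy hz [] exy [] eyz [] exz; subst => h1 h2 h3 h4 h5 h6 W;
rewrite /orient !circ_rep_id //;
try (have xy := h1 erefl); try (have yx := h2 erefl);
try (have yz := h3 erefl); try (have zy := h4 erefl);
try (have xz := h5 erefl); try (have zx := h6 erefl);
rewrite ?xy ?yx ?yz ?zy ?xz ?zx ?(lt_gtF xy) ?(lt_gtF yx) ?(lt_gtF yz)
  ?(lt_gtF zy) ?(lt_gtF xz) ?(lt_gtF zx) /=; lra.
Qed.

Lemma trans_lem (R : realType) (s t : R) : (s = 1 \/ s = -1) -> (t = 1 \/ t = -1) ->
  (- t - - s + 1 = 1 \/ - t - - s + 1 = -1) -> (t = 1 <-> s = 1 \/ (- s = 1 /\ t = 1)).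
Proof.
move=> [] -> [] -> W; split => H.
all: try (by left).
all: try (by right; split => //; lra).
all: try (by exfalso; lra).
all: try (by case: H => [|[]] ? ; lra).
all: try (by case: H => [|[]] ? ?; lra).
all: try (by case: H => [|[]] ? ?; exfalso; lra).
Qed.

Local Open Scope ereal_scope.

Lemma meas_eqR (R : realType) d (T : measurableType d) (g : T -> R) (r : R) :
  measurable_fun setT g -> measurable [set t | g t = r].
Proof. by move=> mg; apply: (@mpre _ _ _ _ g [set r]) => //; exact: measurable_set1. Qed.

Lemma meas_eqE (R : realType) d (T : measurableType d) (g : T -> \bar R) (r : \bar R) :
  measurable_fun setT g -> measurable [set t | g t = r].
Proof.
move=> mg; have := emeasurable_neq measurableT mg r; rewrite setTI => /measurableC.
congr measurable; apply/seteqP; split => t /=.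
  by move/negP; rewrite negbK => /eqP.
by move=> ->; rewrite eqxx.
Qed.

Lemma nu_fin (R : realType) d (B : measurableType d) (nu : probability B R) (A : set B) :
  measurable A -> nu A = (fine (nu A))%:E.
Proof.
move=> mA; rewrite fineK // ge0_fin_numE //.
by apply: (le_lt_trans (probability_le1 nu mA)); exact: ltry.
Qed.

Section PerA.
Context (R : realType) d (B : measurableType d) (nu : probability B R).
Local Notation m2 := (nu \x nu).
Local Notation m3 := ((nu \x nu) \x nu).
Context (c : B -> B -> R).
Context (mc : measurable_fun setT (fun p : B * B => c p.1 p.2)).
Context (calt : forall u v, c v u = (- c u v)%R).

Let L x := [set z | c z x = 1%R].
Let F x := fine (nu (L x)).

Lemma mc_comp d' (T : measurableType d') (f g : T -> B) :
  measurable_fun setT f -> measurable_fun setT g ->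
  measurable_fun setT (fun t => c (f t) (g t)).
Proof.
move=> mf mg.
exact: (measurableT_comp (f := fun p : B * B => c p.1 p.2) mc (measurable_fun_pair mf mg)).
Qed.

Lemma mL x : measurable (L x).
Proof. apply: meas_eqR; apply: mc_comp => //; exact: measurable_cst. Qed.


Let N2 := [set p : B * B | ~ (c p.1 p.2 = 1%R \/ c p.1 p.2 = (-1)%R)].

Lemma mN2 : measurable N2.
Proof.
apply: measurableC; apply: measurableU; apply: meas_eqR; exact: mc.
Qed.

Lemma mLfun : measurable_fun setT (fun x => nu (L x)).
Proof.
have -> : (fun x => nu (L x)) = (fun x => nu (xsection [set p : B * B | c p.2 p.1 = 1%R] x)).
  by apply/funext => x; rewrite xsectionE.
apply: msec2; apply: meas_eqR; apply: mc_comp; [exact: measurable_snd|exact: measurable_fst].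
Qed.

Lemma P2 (N20 : m2 N2 = 0) : exists X, [/\ measurable X, nu X = 0 &
  forall x, ~ X x -> (0 <= F x < 1)%R].
Proof.
pose X := [set x | nu (L x) = 1].
have mX : measurable X by apply: meas_eqE; exact: mLfun.
exists X; split => //.
  apply: (@key _ _ _ nu X [set p | c p.2 p.1 = 1%R] N2) => //.
  - by apply: meas_eqR; apply: mc_comp; [exact: measurable_snd|exact: measurable_fst].
  - exact: mN2.
  - move=> [u v] /= H; have : c u v = 1%R \/ c u v = (-1)%R.
      by apply: contrapT.
    by case=> e; [right|left; rewrite calt e opprK].
  - move=> y' Xy'; apply: (@subset_measure0 _ _ _ nu _ (~` L y')).
    + by apply: measurableI => //; apply: meas_eqR; apply: mc_comp; [exact: measurable_cst|exact: measurable_id].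
    + by apply: measurableC; exact: mL.
    + move=> y [_ e] /=; rewrite /L /= calt e => H.
      by have : (-1 : R)%R = 1%R by []; lra.
    + have h := probability_setC nu (mL y'); rewrite Xy' subee // in h; exact: h.
move=> x nX; apply/andP; split; first by apply: fine_ge0; exact: measure_ge0.
have := probability_le1 nu (mL x); rewrite (@nu_fin _ _ _ nu _ (mL x)) lee_fin => le1.
rewrite lt_neqAle le1 andbT; apply/eqP => F1; apply: nX.
by rewrite /X /= (@nu_fin _ _ _ nu _ (mL x)) -/(F x) F1.
Qed.


Lemma P1 (N20 : m2 N2 = 0) (W0 : set (B * B * B)) (mW0 : measurable W0)
  (W00 : m3 W0 = 0)
  (HW : forall x y z, ~ W0 ((x, y), z) ->
     (c y z - c x z + c x y = 1 \/ c y z - c x z + c x y = -1)%R) :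
  exists P, [/\ measurable P, m2 P = 0 &
    forall u v, ~ P (u, v) -> c u v = 1%R -> (F u < F v)%R].
Proof.
pose Jset := [set q : B * B * B | c q.1.1 q.2 = 1%R /\ c q.2 q.1.2 = 1%R].
have mJset : measurable Jset.
  apply: measurableI; apply: meas_eqR; apply: mc_comp.
  - by apply: measurableT_comp; exact: measurable_fst.
  - exact: measurable_snd.
  - exact: measurable_snd.
  - by apply: measurableT_comp; [exact: measurable_snd|exact: measurable_fst].
have mJf := @msec3 _ _ _ nu _ mJset.
pose T := [set p : B * B | c p.1 p.2 = 1%R /\ nu (xsection Jset p) = 0].
have mT : measurable T.
  apply: measurableI; first by apply: meas_eqR; apply: mc_comp;
    [exact: measurable_fst|exact: measurable_snd].
  exact: meas_eqE.
have T0 : m2 T = 0.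
  rewrite m2E; apply: integral0_eq => x _.
  apply: (@key _ _ _ nu (xsection T x) [set p | c p.1 p.2 = 1%R] N2).
  - exact: measurable_xsection.
  - by apply: meas_eqR; exact: mc.
  - exact: mN2.
  - exact: N20.
  - move=> [u v] /= H; have : c u v = 1%R \/ c u v = (-1)%R by apply: contrapT.
    by case=> e; [left|right; rewrite calt e opprK].
  - move=> y'; rewrite xsectionE /= => -[_ J0].
    apply: (@subset_measure0 _ _ _ nu _ (xsection Jset (x, y'))).
    + apply: (@measurableI _ _ [set y | T (x, y)] [set y | c y y' = 1%R]).
        by have := measurable_xsection x mT; rewrite xsectionE.
      by apply: meas_eqR; apply: mc_comp; [exact: measurable_id|exact: measurable_cst].
    + exact: measurable_xsection.
    + by move=> y; rewrite !xsectionE /= => -[[e1 _] e2].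
    + exact: J0.
pose N2s := [set p : B * B | N2 (p.2, p.1)].
have mN2s : measurable N2s by apply: mswap; exact: mN2.
have N2s0 : m2 N2s = 0 by rewrite /N2s swap_m2 //; exact: mN2.
pose Qb := [set q : B * B * B | N2 (q.2, q.1.1)] `|` [set q | N2 (q.2, q.1.2)] `|` W0.
have mQ1 : measurable [set q : B * B * B | N2 (q.2, q.1.1)].
  apply: (@mpre _ _ _ _ (fun q : B * B * B => (q.2, q.1.1))); last exact: mN2.
  apply: measurable_fun_pair; first exact: measurable_snd.
  by apply: measurableT_comp; exact: measurable_fst.
have mQ2 : measurable [set q : B * B * B | N2 (q.2, q.1.2)].
  apply: (@mpre _ _ _ _ (fun q : B * B * B => (q.2, q.1.2))); last exact: mN2.
  apply: measurable_fun_pair; first exact: measurable_snd.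
  by apply: measurableT_comp; [exact: measurable_snd|exact: measurable_fst].
have mQb : measurable Qb by apply: measurableU => //; exact: measurableU.
have Qb0 : m3 Qb = 0.
  apply: null_set_setU => //; first exact: measurableU.
  apply: null_set_setU => //.
  - exact: (@pull_xz _ _ _ nu _ mN2s N2s0).
  - exact: (@pull_yz _ _ _ nu _ mN2s N2s0).
pose M := [set p : B * B | nu (xsection Qb p) != 0].
have mM : measurable M.
  by have := emeasurable_neq measurableT (@msec3 _ _ _ nu _ mQb) 0; rewrite setTI.
have M0 : m2 M = 0.
  apply: L0; first exact: msec3.
  - by move=> p; exact: measure_ge0.
  - by rewrite -m3E; exact: Qb0.
exists (T `|` M); split.
- exact: measurableU.
- exact: null_set_setU.
move=> u v nP e.
have nJ : nu (xsection Jset (u, v)) != 0.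
  by apply/negP => /eqP J0; apply: nP; left.
have Q0 : nu (xsection Qb (u, v)) = 0.
  by apply/eqP; apply: contrapT => H; apply: nP; right; apply/negP.
set J := xsection Jset (u, v) in nJ; set Q := xsection Qb (u, v) in Q0.
have mJ : measurable J by exact: measurable_xsection.
have mQ : measurable Q by exact: measurable_xsection.
have eqs : L v `|` Q = (L u `|` J) `|` Q.
  have key3 : forall z, ~ Q z -> (c z v = 1%R <-> c z u = 1%R \/ (c u z = 1%R /\ c z v = 1%R)).
    move=> z; rewrite /Q xsectionE /Qb /= => nQz.
    have hs : c z u = 1%R \/ c z u = (-1)%R by apply: contrapT => H; apply: nQz; left; left.
    have ht : c z v = 1%R \/ c z v = (-1)%R by apply: contrapT => H; apply: nQz; left; right.
    have hw := HW u v z (fun H => nQz (or_intror H)).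
    rewrite (calt z v) (calt z u) e in hw.
    by rewrite (calt z u); exact: trans_lem hs ht hw.
  apply/seteqP; split => z Hz; (have [Qz|nQz] := pselect (Q z); first by right).
  - case: Hz => [Lv|//]; left.
    have [+ _] := key3 z nQz; move=> /(_ Lv) [H|H]; [left; exact: H|right].
    by rewrite /J xsectionE.
  - case: Hz => [[Lu|Jz]|//]; left; apply: (proj2 (key3 z nQz)).
      by left.
    by right; move: Jz; rewrite /J xsectionE.
have dis : L u `&` J = set0.
  apply/seteqP; split => z //=; rewrite /J xsectionE /= /L /= => -[e1 [e2 _]].
  by move: e2; rewrite calt e1; lra.
have : nu (L v) = nu (L u) + nu J.
  rewrite -(@measureU0 _ _ _ nu _ _ (mL v) mQ Q0) eqs (@measureU0 _ _ _ nu _ _ _ mQ Q0); last first.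
    by apply: measurableU => //; exact: mL.
  by rewrite measureU //; exact: mL.
rewrite (@nu_fin _ _ _ nu _ (mL v)) (@nu_fin _ _ _ nu _ (mL u)) (@nu_fin _ _ _ nu _ mJ).
rewrite -EFinD => -[Fv].
have j0 : (0 <= fine (nu J))%R by apply: fine_ge0; exact: measure_ge0.
have jn0 : fine (nu J) != 0%R.
  by apply: contra nJ => /eqP j0'; rewrite (@nu_fin _ _ _ nu _ mJ) j0'.
rewrite /F Fv; lra.
Qed.

Lemma perA (N20 : m2 N2 = 0) (W0 : set (B * B * B)) (mW0 : measurable W0)
  (W00 : m3 W0 = 0)
  (HW : forall x y z, ~ W0 ((x, y), z) ->
     (c y z - c x z + c x y = 1 \/ c y z - c x z + c x y = -1)%R) :
  {ae m3, forall p : B * B * B, orient (F p.1.1) (F p.1.2) (F p.2) =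
     (c p.1.2 p.2 - c p.1.1 p.2 + c p.1.1 p.1.2)%R}.
Proof.
have [X [mX X0 HX]] := P2 N20.
have [P [mP P0 HP]] := @P1 N20 W0 mW0 W00 HW.
pose N := N2 `|` P `|` (X `*` setT) `|` (setT `*` X).
have mN : measurable N.
  by apply: measurableU; [apply: measurableU; [apply: measurableU => //; exact: mN2|]|];
    apply: measurableX.
have N0 : m2 N = 0.
  have XT : m2 (X `*` setT) = 0.
    by transitivity (nu X * nu setT); [exact: product_measure1E|rewrite X0 mul0e].
  have TX : m2 (setT `*` X) = 0.
    by transitivity (nu setT * nu X); [exact: product_measure1E|rewrite X0 mule0].
  rewrite /N; apply: (@null_set_setU _ _ _ (nu \x nu)) => //; first (apply: measurableU; [apply: measurableU => //; exact: mN2|]; exact: measurableX).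
  - exact: measurableX.
  - apply: null_set_setU => //; first (apply: measurableU => //; exact: mN2).
    + exact: measurableX.
    + apply: null_set_setU => //; exact: mN2.
have gN : forall u v, ~ N (u, v) -> [/\ ~ N2 (u, v), ~ P (u, v), ~ X u & ~ X v].
  move=> u v H; split => h; apply: H.
  - by left; left; left.
  - by left; left; right.
  - by left; right.
  - by right.
have [Na [mNa Na0 HNa]] := @pull_all _ _ _ nu N mN N0.
exists (Na `|` W0); split.
- exact: measurableU.
- exact: null_set_setU.
move=> [[x y] z] /= Hneq; apply: contrapT => H; apply: Hneq.
have nNa : ~ Na ((x, y), z) by move=> h; apply: H; left.
have nW : ~ W0 ((x, y), z) by move=> h; apply: H; right.
have [nxy nyz nxz [nyx nzy nzx]] := HNa x y z nNa.
have [n2xy Pxy Xx Xy] := gN _ _ nxy.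
have [n2yz Pyz _ Xz] := gN _ _ nyz.
have [n2xz Pxz _ _] := gN _ _ nxz.
have [_ Pyx _ _] := gN _ _ nyx.
have [_ Pzy _ _] := gN _ _ nzy.
have [_ Pzx _ _] := gN _ _ nzx.
have pm : forall u v, ~ N2 (u, v) -> c u v = 1%R \/ c u v = (-1)%R.
  by move=> u v h; apply: contrapT.
have rev : forall u v, c u v = (-1)%R -> c v u = 1%R.
  by move=> u v e; rewrite calt e opprK.
apply: orient_lem.
- exact: HX.
- exact: HX.
- exact: HX.
- exact: pm.
- exact: pm.
- exact: pm.
- exact: HP.
- by move=> e; apply: HP => //; exact: rev.
- exact: HP.
- by move=> e; apply: HP => //; exact: rev.
- exact: HP.
- by move=> e; apply: HP => //; exact: rev.
- exact: HW.
Qed.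

End PerA.

Local Open Scope ring_scope.

Theorem lemma4p10 (R : realType) (G : ptopologicalType)
    (mul : G -> G -> G) (inv : G -> G) (one : G)
    (haar : {measure set borel_of G -> \bar R})
    (mu : probability (borel_of G) R)
    (d : measure_display) (B : measurableType d) (act : G -> B -> B)
    (nu : probability B R)
    (w : B -> B -> B -> R) :
  lcsc_group mul inv one ->
  left_haar mul haar ->
  spread_out mul one haar mu ->
  standard_borel B R ->
  measurable_action mul one act ->
  stationary act mu nu ->
  doubly_ergodic act nu ->
  zimmer_amenable mul inv act haar nu ->
  measurable_fun [set: B * B * B] (fun p : B * B * B => w p.1.1 p.1.2 p.2) ->
  alternating3 w ->
  strict_cocycle w ->
  (forall g : G, {ae ((nu \x nu) \x nu)%E, forall p : B * B * B,
      w (act g p.1.1) (act g p.1.2) (act g p.2) = w p.1.1 p.1.2 p.2}) ->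
  {ae ((nu \x nu) \x nu)%E, forall p : B * B * B,
      w p.1.1 p.1.2 p.2 = 1 \/ w p.1.1 p.1.2 p.2 = -1} ->
  {ae nu, forall a : B, {ae ((nu \x nu) \x nu)%E, forall p : B * B * B,
      orient (fa nu w a p.1.1) (fa nu w a p.1.2) (fa nu w a p.2)
      = w p.1.1 p.1.2 p.2}}.
Proof.
move=> _ _ _ _ _ _ _ _ mw alt coc _ Hpm.
have [W0 [mW0 W00 sW0]] := Hpm.
have HW : forall p, ~ W0 p -> w p.1.1 p.1.2 p.2 = 1 \/ w p.1.1 p.1.2 p.2 = -1.
  by move=> p nW; apply: contrapT => h; apply: nW; apply: sW0.
have wrot : forall a u v, w u v a = w a u v.
  move=> a u v; have [h1 _] := alt a u v; have [_ h2] := alt u a v.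
  by rewrite h2 h1 opprK.
have wcoc : forall a x y z, w x y z = w a y z - w a x z + w a x y.
  by move=> a x y z; have := coc a x y z; lra.
have mf := measurable_fun_ysection (nu \x nu : probability (B * B)%type R)%E mW0.
pose A0 := [set a | ((nu \x nu)%E (ysection W0 a) != 0)%E].
have mA0 : measurable A0.
  by have := emeasurable_neq measurableT mf 0%E; rewrite setTI.
have A00 : nu A0 = 0%E.
  apply: L0 => //; try (by move=> a; exact: measure_ge0).
  transitivity (((nu \x nu : probability (B * B)%type R) \x^ nu)%E W0); first by [].
  by rewrite -m3_12.
exists A0; split => // a /= Ha; apply: contrapT => nA0; apply: Ha.
have Ny : (nu \x nu)%E (ysection W0 a) = 0%E.
  by apply/eqP; apply: contrapT => h; apply: nA0; apply/negP.
pose c := w a.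
have mc : measurable_fun setT (fun p : B * B => c p.1 p.2).
  have hp : measurable_fun setT (fun p : B * B => ((a, p.1), p.2)).
    apply: measurable_fun_pair; last exact: measurable_snd.
    by apply: measurable_fun_pair; [exact: measurable_cst|exact: measurable_fst].
  exact: (measurableT_comp mw hp).
have calt : forall u v, c v u = - c u v by move=> u v; rewrite /c; have [_ h] := alt a u v.
have N20 : (nu \x nu)%E [set p : B * B | ~ (c p.1 p.2 = 1 \/ c p.1 p.2 = -1)] = 0%E.
  apply: (subset_measure0 (B := ysection W0 a)) => //.
  - apply: measurableC; apply: measurableU; apply: meas_eqR; exact: mc.
  - exact: measurable_ysection.
  - move=> [u v] /= h; rewrite ysectionE /=; apply: contrapT => nW.
    apply: h; rewrite /c -wrot; exact: (HW ((u, v), a)).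
have HW' : forall x y z, ~ W0 ((x, y), z) ->
    c y z - c x z + c x y = 1 \/ c y z - c x z + c x y = -1.
  by move=> x y z nW; rewrite /c -wcoc; exact: (HW ((x, y), z)).
have [N [mN N0 sN]] := @perA _ _ _ nu c mc calt N20 W0 mW0 W00 HW'.
exists N; split => // p /= hp; apply: sN => /= h; apply: hp.
by rewrite h /c -wcoc.
Qed.
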